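(* For every $n\ge 2$ we have $C_n=P_n^2$, where $C_n=\prod_{\sigma\in G_n}(\sigma(\mathrm{EC}_n)-1)$ and $P_n=\prod_{\sigma\in G_{n-1}}\bigl(x_n-\sigma(\mathrm{EC}_{n-1}(x_1,\dots,x_{n-1}))\bigr)$.
   Context: Let $x_1,\dots,x_n$ be algebraically independent indeterminates over $\mathbb{Q}$; in an algebraic closure of $\mathbb{Q}(x_1,\dots,x_n)$ fix $y_1,\dots,y_n$ with $y_i^2=1-x_i^2$. For indices $i_1<\dots<i_m$, $\mathrm{EC}_m(x_{i_1},\dots,x_{i_m})=\sum_{S\subseteq\{i_1,\dots,i_m\},\ |S|\text{ even}}(-1)^{|S|/2}\prod_{j\in S}y_j\prod_{j\notin S}x_j$, and $\mathrm{EC}_n=\mathrm{EC}_n(x_1,\dots,x_n)$. $G_n$ is the Galois group of $\mathbb{Q}(x_1,\dots,x_n,\ y_iy_j:1\le i<j\le n)$ over $\mathbb{Q}(x_1,\dots,x_n)$, and $G_{n-1}$ is the Galois group of $\mathbb{Q}(x_1,\dots,x_n,\ y_iy_j:1\le i<j\le n-1)$ over $\mathbb{Q}(x_1,\dots,x_n)$ (trivial when $n=2$). Note $\mathrm{EC}_m$ involves only even products of the $y_j$, hence lies in these fields. *)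

(* Defs.v *)
From HB Require Import structures.
From mathcomp Require Import all_boot all_order all_algebra.
Set Implicit Arguments. Unset Strict Implicit. Unset Printing Implicit Defensive.
Import Order.TTheory GRing.Theory Num.Theory.
Local Open Scope ring_scope.

(* Indexing convention: the paper's x_1,...,x_n, y_1,...,y_n are
   represented by x 0, ..., x (n-1) and y 0, ..., y (n-1), with
   x y : nat -> L.  So x_n is x n.-1. *)
Definition sgnb {L : comNzRingType} (b : bool) : L := if b then -1 else 1.

(* The image under the Galois element attached to the sign vector e of
   EC_m(x_1,...,x_m): the automorphism acts by y_j |-> (-1)^(e j) y_j and
   fixes the x_j. *)
Definition ECsig {L : comNzRingType} (m : nat) (x y : nat -> L)
    (e : {ffun 'I_m -> bool}) : L :=
  \sum_(S : {set 'I_m} | ~~ odd #|S|)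
     (-1) ^+ (#|S|./2) * \prod_(j in S) (sgnb (e j) * y (val j))
                       * \prod_(j in ~: S) x (val j).

Definition EC {L : comNzRingType} (m : nat) (x y : nat -> L) : L :=
  @ECsig L m x y [ffun _ => false].

(* The Galois group G_m of Q(x, y_i y_j : i<j<=m) over Q(x) (x algebraically
   independent) is {+-1}^m / {+-1}, acting by y_j |-> eps_j y_j (the global
   sign -1 acts trivially on the even products y_i y_j).  Gal m is the set
   of sign vectors with first sign +1, i.e. one representative per element
   of G_m (for m <= 1 it is a single element: the trivial group). *)
Definition Gal (m : nat) : {set {ffun 'I_m -> bool}} :=
  [set e : {ffun 'I_m -> bool} | [forall i : 'I_m, (val i == 0)%N ==> ~~ e i]].

Definition Cn {L : comNzRingType} (n : nat) (x y : nat -> L) : L :=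
  \prod_(e in Gal n) (@ECsig L n x y e - 1).

Definition Pn {L : comNzRingType} (n : nat) (x y : nat -> L) : L :=
  \prod_(e in Gal n.-1) (x n.-1 - @ECsig L n.-1 x y e).

(* Main.v *)
Require Import Defs.
From HB Require Import structures.
From mathcomp Require Import all_boot all_order all_algebra.
From mathcomp Require Import ring.
Import GRing.Theory.
Local Open Scope ring_scope.

Lemma big_split_max (R : Type) (idx : R) (op : Monoid.com_law idx) m
  (A : {set 'I_m.+1}) (F : 'I_m.+1 -> R) :
  \big[op/idx]_(i in A) F i =
  op (\big[op/idx]_(j < m | lift ord_max j \in A) F (lift ord_max j))
     (if ord_max \in A then F ord_max else idx).
Proof.
rewrite big_mkcond big_ord_recr /=; congr (op _ _); rewrite [RHS]big_mkcond.
apply: eq_bigr => j _.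
have -> : widen_ord (leqnSn m) j = lift ord_max j.
  by apply: val_inj => /=; rewrite /bump leqNgt ltn_ord.
by [].
Qed.

Definition phi m (q : {set 'I_m} * bool) : {set 'I_m.+1} :=
  [set i | if unlift ord_max i is Some j then j \in q.1 else q.2].
Definition phiinv m (S : {set 'I_m.+1}) : {set 'I_m} * bool :=
  ([set j | lift ord_max j \in S], ord_max \in S).

Lemma phi_bij m : bijective (@phi m).
Proof.
exists (@phiinv m).
  move=> [S b]; rewrite /phiinv; congr pair.
    by apply/setP => j; rewrite !inE liftK.
  by rewrite inE unlift_none.
move=> S; apply/setP => i; rewrite inE; case: unliftP => [j ->|->] //.
by rewrite inE.
Qed.

Lemma card_phi m S b : #|@phi m (S, b)| = (#|S| + b)%N.
Proof.
have cE (T : finType) (A : {set T}) : #|A| = (\sum_(i in A) 1)%N by rewrite sum1_card.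
rewrite !cE (big_split_max _ _ addn) inE unlift_none /=.
congr (_ + _)%N.
by apply: eq_bigl => j; rewrite inE liftK.
Qed.

Section G.
Variable L : comNzRingType.

Lemma prod_phi m S b (f : nat -> L) :
  \prod_(i in @phi m (S, b)) f (val i) = \prod_(j in S) f (val j) * (if b then f m else 1).
Proof.
rewrite big_split_max; congr (_ * _).
  apply: eq_big => j; first by rewrite !inE liftK.
  by move=> _; congr f; apply: lift_max.
by rewrite !inE unlift_none.
Qed.

Lemma prod_phiC m S b (f : nat -> L) :
  \prod_(i in ~: @phi m (S, b)) f (val i) = \prod_(j in ~: S) f (val j) * (if b then 1 else f m).
Proof.
rewrite big_split_max; congr (_ * _).
  apply: eq_big => j; first by rewrite !inE liftK.
  by move=> _; congr f; apply: lift_max.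
by rewrite !inE unlift_none; case: b.
Qed.

Definition G m (x v : nat -> L) (p : bool) : L :=
  \sum_(S : {set 'I_m} | odd #|S| == p)
     (-1) ^+ (#|S|./2) * \prod_(j in S) v (val j) * \prod_(j in ~: S) x (val j).

Lemma Grec m x v p :
  G m.+1 x v p = x m * G m x v p + (if p then v m else - v m) * G m x v (~~ p).
Proof.
rewrite /G (reindex (@phi m)); last by apply: onW_bij; apply: phi_bij.
set T := fun S : {set 'I_m.+1} => (-1) ^+ (#|S|./2) * \prod_(j in S) v (val j) * \prod_(j in ~: S) x (val j).
have -> : \sum_(q | odd #|phi m q| == p) T (phi m q) =
   \sum_(S : {set 'I_m}) \sum_(b : bool) (if odd #|phi m (S,b)| == p then T (phi m (S,b)) else 0).
  by rewrite pair_bigA big_mkcond; apply: eq_bigr => -[S b] _.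
rewrite (big_mkcond (fun S : {set 'I_m} => odd #|S| == p)) (big_mkcond (fun S : {set 'I_m} => odd #|S| == ~~ p)).
rewrite !mulr_sumr -big_split; apply: eq_bigr => S _.
rewrite big_bool /T /= !card_phi !prod_phi !prod_phiC addn1 addn0 -uphalfE uphalf_half exprD.
set s := (-1) ^+ (#|S|./2).
rewrite /=; case: (odd #|S|); case: p => /=; ring.
Qed.

Lemma G0 x v p : G 0 x v p = if p then 0 else 1.
Proof.
have all0 (S : {set 'I_0}) : S = set0 by apply/setP => -[].
rewrite /G big_mkcond (big_pred1 set0); last by move=> S; rewrite /= (all0 S) eqxx.
rewrite cards0 /= big_set0 setC0.
rewrite (eq_bigl (fun _ => false)) ?big_pred0 //=; last by case.
by case: p; rewrite /= ?mulr1.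
Qed.

Lemma Gnorm m x v : (forall i, (i < m)%N -> x i ^+ 2 + v i ^+ 2 = 1) ->
  G m x v false ^+ 2 + G m x v true ^+ 2 = 1.
Proof.
elim: m => [|m IH] H; first by rewrite !G0 expr0n /= addr0 expr1n.
rewrite !Grec /=.
have -> : (x m * G m x v false + - v m * G m x v true) ^+ 2 +
   (x m * G m x v true + v m * G m x v false) ^+ 2 =
   (x m ^+ 2 + v m ^+ 2) * (G m x v false ^+ 2 + G m x v true ^+ 2) by ring.
by rewrite IH ?H ?mulr1 // => i hi; apply: H; apply: ltnW.
Qed.

Lemma G_ext m x v v' p : (forall j : 'I_m, v (val j) = v' (val j)) ->
  G m x v p = G m x v' p.
Proof.
move=> E; apply: eq_bigr => S _; congr (_ * _ * _).
by apply: eq_bigr => j _; rewrite E.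
Qed.

End G.
Arguments G {L}.

Definition ev m (e : {ffun 'I_m -> bool}) (k : nat) : bool :=
  if @insub nat (fun k => k < m)%N 'I_m k is Some j then e j else false.

Arguments ev {m}.

Lemma ev_val m e (j : 'I_m) : ev e (val j) = e j.
Proof. by rewrite /ev valK. Qed.

Definition vof (L : comNzRingType) m (y : nat -> L) (e : {ffun 'I_m -> bool}) k :=
  sgnb (ev e k) * y k.

Arguments vof {L m}.

Lemma EC_G (L : comNzRingType) m (x y : nat -> L) e :
  @ECsig L m x y e = G m x (vof y e) false.
Proof.
apply: eq_big => S; first by rewrite eqbF_neg.
by move=> _; congr (_ * _ * _); apply: eq_bigr => j _; rewrite /vof ev_val.
Qed.

Arguments G_ext {L m x v v' p}.

Lemma vlift m (j : 'I_m) : val (lift ord_max j) = val j.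
Proof. exact: lift_max. Qed.

Definition psi m (q : {ffun 'I_m -> bool} * bool) : {ffun 'I_m.+1 -> bool} :=
  [ffun i => if unlift ord_max i is Some j then q.1 j else q.2].
Definition psiinv m (e : {ffun 'I_m.+1 -> bool}) : {ffun 'I_m -> bool} * bool :=
  ([ffun j => e (lift ord_max j)], e ord_max).

Lemma psi_bij m : bijective (psi m).
Proof.
exists (@psiinv m).
  move=> [e b]; rewrite /psiinv; congr pair.
    by apply/ffunP => j; rewrite !ffunE liftK.
  by rewrite ffunE unlift_none.
move=> e; apply/ffunP => i; rewrite !ffunE; case: unliftP => [j ->|->] //.
by rewrite ffunE.
Qed.

Lemma psi_Gal m q : (psi m.+1 q \in Gal m.+2) = (q.1 \in Gal m.+1).
Proof.
rewrite !inE; apply/forallP/forallP => H i.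
  by have := H (lift ord_max i); rewrite ffunE liftK vlift.
case: (unliftP ord_max i) => [j ->|->]; rewrite ffunE ?liftK ?unlift_none.
  by rewrite vlift; exact: H.
by [].
Qed.

Lemma vof_psi_lt (L : comNzRingType) m (y : nat -> L) q (j : 'I_m) :
  vof y (psi m q) (val j) = vof y q.1 (val j).
Proof.
have := @ev_val _ (psi m q) (lift ord_max j); rewrite vlift ffunE liftK /= => E.
by rewrite /vof E ev_val.
Qed.

Arguments vof_psi_lt {L m} y q j.

Lemma vof_psi_max (L : comNzRingType) m (y : nat -> L) q :
  vof y (psi m q) m = sgnb q.2 * y m.
Proof.
have := @ev_val _ (psi m q) ord_max; rewrite ffunE unlift_none /= => E.
by rewrite /vof E.
Qed.

Theorem mainTheorem2 (L : comNzRingType) (n : nat) (x y : nat -> L) :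
  (2 <= n)%N ->
  (forall i, (i < n)%N -> y i ^+ 2 = 1 - x i ^+ 2) ->
  Cn n x y = Pn n x y ^+ 2.
Proof.
case: n => [|[|m]] // _ Hy.
rewrite /Cn /Pn /=.
rewrite (reindex (psi m.+1)); last by apply: onW_bij; apply: psi_bij.
rewrite (eq_bigl (fun q => q.1 \in Gal m.+1)); last by move=> q; rewrite psi_Gal.
have -> : \prod_(q | q.1 \in Gal m.+1) (@ECsig L m.+2 x y (psi m.+1 q) - 1) =
  \prod_(e in Gal m.+1) \prod_(b : bool) (@ECsig L m.+2 x y (psi m.+1 (e, b)) - 1).
  by rewrite pair_big; apply: eq_bigl => -[e b] /=; rewrite andbT.
rewrite -prodrXl; apply: eq_bigr => e _.
rewrite big_bool /= !EC_G (Grec _ m.+1 x (vof y (psi m.+1 (e,true))) false).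
rewrite (Grec _ m.+1 x (vof y (psi m.+1 (e,false))) false) /=.
rewrite !(G_ext (vof_psi_lt y (e,true))) !(G_ext (vof_psi_lt y (e,false))).
rewrite !vof_psi_max /sgnb /=.
set a := G m.+1 x (vof y e) false.
set bb := G m.+1 x (vof y e) true.
have Gn : a ^+ 2 + bb ^+ 2 = 1.
  apply: Gnorm => i hi; rewrite /vof exprMn Hy; last by apply: (ltn_trans hi).
  by case: (ev e i); rewrite /= ?sqrrN expr1n mul1r; ring.
have hb : bb ^+ 2 = 1 - a ^+ 2 by rewrite -Gn; ring.
have hy := Hy m.+1 (ltnSn _).
transitivity ((x m.+1 * a - 1) ^+ 2 - y m.+1 ^+ 2 * bb ^+ 2); first by ring.
rewrite hy hb; ring.
Qed.
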